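(* Let $H$ be an abelian group with an alternating $\mathbb{Z}$-bilinear form $\langle-,-\rangle$, and let $z\in H\setminus\ker\mu$. Then $H_2(\mathbb{Q}[H])_{(z)}=0$.
   Context: $\mu:H\to\mathrm{Hom}_{\mathbb{Z}}(H,\mathbb{Z})$, $\mu(x)(y)=\langle x,y\rangle$. $\mathbb{Q}[H]$ is the $\mathbb{Q}$-vector space with basis symbols $[x]$, $x\in H$, with Lie bracket $[[x],[y]]=\langle x,y\rangle[x+y]$. Chevalley–Eilenberg complex $C_p(\mathbb{Q}[H])=\bigwedge^p_{\mathbb{Q}}\mathbb{Q}[H]$, $\partial(x_1\wedge\cdots\wedge x_p)=\sum_{i<j}(-1)^{i+j}[x_i,x_j]\wedge x_1\wedge\cdots\widehat{x_i}\cdots\widehat{x_j}\cdots\wedge x_p$. For $p>0$, $C_p(\mathbb{Q}[H])_{(z)}$ is the span of $[u_1]\wedge\cdots\wedge[u_p]$ with $u_1+\cdots+u_p=z$; it is a subcomplex, and $H_p(\mathbb{Q}[H])_{(z)}$ denotes its homology. *)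

(* Defs.v *)
From HB Require Import structures.
From mathcomp Require Import all_boot all_order all_algebra all_fingroup.
Set Implicit Arguments. Unset Strict Implicit. Unset Printing Implicit Defensive.
Import Order.TTheory GRing.Theory Num.Theory.
Local Open Scope ring_scope.

Definition alt_bilinear (H : zmodType) (B : H -> H -> int) : Prop :=
  [/\ forall x y y', B x (y + y') = B x y + B x y',
      forall x x' y, B (x + x') y = B x y + B x' y
    & forall x, B x x = 0].

Definition not_in_ker_mu (H : zmodType) (B : H -> H -> int) (z : H) : Prop :=
  exists y, B z y != 0.

(* A p-chain of the Chevalley--Eilenberg complex of Q[H] is written as a
   formal finite Q-linear combination of wedges [u_1] /\ ... /\ [u_p],
   a term (q, [:: u_1; ...; u_p]) standing for q [u_1] /\ ... /\ [u_p]. *)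
Notation chain H := (seq (rat * seq H)).

(* Antisymmetrization: coefficient of the basis tensor t in
   Alt([s_1] (x) ... (x) [s_p]) = sum_sigma sgn(sigma) [s_sigma(1)] (x) ... *)
Definition alt (H : zmodType) (s t : seq H) : rat :=
  \sum_(sg : 'S_(size s))
     (-1) ^+ odd_perm sg * ([seq nth 0 s (sg i) | i <- enum 'I_(size s)] == t)%:R.

(* The image of a formal chain in the tensor algebra under the (injective,
   char 0) embedding of the exterior algebra as alternating tensors. *)
Definition ev (H : zmodType) (c : chain H) (t : seq H) : rat :=
  \sum_(a <- c) a.1 * alt a.2 t.

Definition ext_eq (H : zmodType) (c d : chain H) : Prop :=
  forall t : seq H, ev c t = ev d t.

(* Chevalley--Eilenberg boundary on wedges (0-based indices; the sign
   (-1)^(i+j) is unchanged w.r.t. 1-based indexing):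
   d(x_1 /\ ... /\ x_p) = sum_(i<j) (-1)^(i+j) <x_i,x_j> [x_i+x_j] /\ x_1 ..^i..^j.. x_p *)
Definition ce_bd (H : zmodType) (B : H -> H -> int) (c : chain H) : chain H :=
  flatten [seq
    [seq (a.1 * (-1) ^+ (ij.1 + ij.2)%N * (B (nth 0 a.2 ij.1) (nth 0 a.2 ij.2))%:~R,
          (nth 0 a.2 ij.1 + nth 0 a.2 ij.2)
            :: [seq nth 0 a.2 k | k <- iota 0 (size a.2) & (k != ij.1) && (k != ij.2)])
    | ij <- [seq (i, j) | i <- iota 0 (size a.2), j <- iota 0 (size a.2)]
    & (ij.1 < ij.2)%N]
  | a <- c].

(* c lies in C_p(Q[H])_(z): a combination of wedges [u_1] /\ ... /\ [u_p]
   with u_1 + ... + u_p = z. *)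
Definition homog (H : zmodType) (p : nat) (z : H) (c : chain H) : Prop :=
  forall a, a \in c -> size a.2 = p /\ \sum_(h <- a.2) h = z.

(* H_p(Q[H])_(z) = 0 (p > 0): every cycle of C_p(z) is a boundary of an
   element of C_(p+1)(z). *)
Definition CE_homology_vanishes (H : zmodType) (B : H -> H -> int)
    (p : nat) (z : H) : Prop :=
  forall c : chain H, homog p z c -> ext_eq (ce_bd B c) [::] ->
    exists b : chain H, homog p.+1 z b /\ ext_eq (ce_bd B b) c.

(* Main.v *)
Require Import Defs.
From HB Require Import structures.
From mathcomp Require Import all_boot all_order all_algebra all_fingroup.
From mathcomp Require Import ring zify.
From Stdlib Require Import Classical.
Set Implicit Arguments. Unset Strict Implicit. Unset Printing Implicit Defensive.
Import Order.TTheory GRing.Theory Num.Theory.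
Local Open Scope ring_scope.

Lemma S2_cases (sg : 'S_2) : sg = 1%g \/ sg = tperm ord0 ord_max.
Proof.
have h0 : forall i : 'I_2, i = ord0 \/ i = ord_max.
  by case=> [[|[|//]]] Hi; [left|right]; apply/val_inj.
have inj := @perm_inj _ sg.
case: (h0 (sg ord0)) => E0.
- left; apply/permP => i; rewrite perm1.
  case: (h0 i) => ->; first by [].
  case: (h0 (sg ord_max)) => // E1; by move: (inj _ _ (etrans E1 (esym E0))).
- right; apply/permP => i.
  case: (h0 i) => ->; first by rewrite tpermL.
  rewrite tpermR.
  case: (h0 (sg ord_max)) => // E1; by move: (inj _ _ (etrans E1 (esym E0))).
Qed.

Lemma alt2 (H : zmodType) (x y : H) t :
  alt [:: x; y] t = (t == [:: x; y])%:R - (t == [:: y; x])%:R.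
Proof.
rewrite /alt /= (bigD1 1%g) //= (bigD1 (tperm ord0 ord_max)) //=; last first.
  by apply/eqP => /permP /(_ ord0); rewrite tpermL perm1.
rewrite big1 ?addr0; last first.
  by move=> sg /andP[/eqP h1 /eqP h2]; case: (S2_cases sg).
rewrite odd_perm1 odd_tperm /= !expr0 expr1 !mul1r mulN1r.
rewrite /= enum_ordSl enum_ordSl enum_ord0 /=.
have -> : lift ord0 ord0 = ord_max :> 'I_2 by apply/val_inj.
by rewrite !perm1 tpermL tpermR /= !(eq_sym t).
Qed.

Lemma alt1 (H : zmodType) (x : H) t :
  alt [:: x] t = (t == [:: x])%:R.
Proof.
rewrite /alt /= (bigD1 1%g) //= big1 ?addr0; last first.
  move=> sg /eqP; case; apply/permP => i; rewrite perm1; apply/val_inj.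
  by case: (sg i) => [[|//] ?]; case: i => [[|//] ?].
rewrite odd_perm1 expr0 mul1r enum_ordSl enum_ord0 /= perm1.
by rewrite eq_sym.
Qed.

Lemma ev_cat (H : zmodType) (c d : chain H) t : ev (c ++ d) t = ev c t + ev d t.
Proof. by rewrite /ev big_cat. Qed.

Lemma ce_bd_cat (H : zmodType) B (c d : chain H) : ce_bd B (c ++ d) = ce_bd B c ++ ce_bd B d.
Proof. by rewrite /ce_bd map_cat flatten_cat. Qed.

Definition scalec (H : zmodType) (k : rat) (c : chain H) : chain H :=
  [seq (k * a.1, a.2) | a <- c].

Lemma ev_scale (H : zmodType) k (c : chain H) t : ev (scalec k c) t = k * ev c t.
Proof. by rewrite /ev big_map mulr_sumr; apply: eq_bigr => a _ /=; rewrite mulrA. Qed.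

Lemma ce_bd_scale (H : zmodType) B k (c : chain H) : ce_bd B (scalec k c) = scalec k (ce_bd B c).
Proof.
rewrite /ce_bd /scalec map_flatten -!map_comp; congr flatten; apply: eq_map => a /=.
rewrite -map_comp; apply: eq_map => ij /=; by rewrite !mulrA.
Qed.

Lemma bd3 (H : zmodType) (B : H -> H -> int) (q : rat) (u v w : H) :
  ce_bd B [:: (q, [:: u; v; w])] =
  [:: (q * (-1) ^+ 1 * (B u v)%:~R, [:: u + v; w]);
      (q * (-1) ^+ 2 * (B u w)%:~R, [:: u + w; v]);
      (q * (-1) ^+ 3 * (B v w)%:~R, [:: v + w; u])].
Proof. by []. Qed.

Lemma bd2 (H : zmodType) (B : H -> H -> int) (q : rat) (u v : H) :
  ce_bd B [:: (q, [:: u; v])] =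
  [:: (q * (-1) ^+ 1 * (B u v)%:~R, [:: u + v])].
Proof. by []. Qed.

Section Main.
Variable H : zmodType.
Variable B : H -> H -> int.
Hypothesis hB : alt_bilinear B.

Lemma BDr x y y' : B x (y + y') = B x y + B x y'.
Proof. by case: hB. Qed.
Lemma BDl x x' y : B (x + x') y = B x y + B x' y.
Proof. by case: hB. Qed.
Lemma Bxx x : B x x = 0.
Proof. by case: hB. Qed.
Lemma B0r x : B x 0 = 0.
Proof. have := BDr x 0 0; rewrite addr0; lia. Qed.
Lemma B0l x : B 0 x = 0.
Proof. have := BDl 0 0 x; rewrite addr0; lia. Qed.
Lemma BNr x y : B x (- y) = - B x y.
Proof. have := BDr x y (- y); rewrite subrr B0r; lia. Qed.
Lemma BNl x y : B (- x) y = - B x y.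
Proof. have := BDl x (- x) y; rewrite subrr B0l; lia. Qed.
Lemma BBr x y y' : B x (y - y') = B x y - B x y'.
Proof. by rewrite BDr BNr. Qed.
Lemma BBl x x' y : B (x - x') y = B x y - B x' y.
Proof. by rewrite BDl BNl. Qed.
Lemma Banti x y : B y x = - B x y.
Proof. have := Bxx (x + y); rewrite !BDl !BDr !Bxx; lia. Qed.
Lemma Bnl x y n : B (x *+ n) y = B x y *+ n.
Proof. elim: n => [|n IH]; first by rewrite !mulr0n B0l. by rewrite !mulrS BDl IH. Qed.
Lemma Bzl x y k : B (x *~ k) y = B x y * k.
Proof.
case: k => n; first by rewrite -pmulrn Bnl -mulrzz pmulrn.
by rewrite NegzE !mulrNz BNl -pmulrn Bnl -mulrzz pmulrn.
Qed.

Variable z : H.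

Definition br x y : rat := (B x y)%:~R.
Definition E a t := alt [:: a; z - a] t.

Lemma alt_swap (x y : H) t : alt [:: x; y] t = - alt [:: y; x] t.
Proof. by rewrite !alt2 opprB. Qed.

Lemma Ezsub a t : E (z - a) t = - E a t.
Proof. by rewrite /E subKr alt_swap. Qed.

Definition InIm (F : seq H -> rat) :=
  exists b, homog 3 z b /\ forall t, ev (ce_bd B b) t = F t.

Lemma im_zero : InIm (fun _ => 0).
Proof. by exists [::]; split => // t; rewrite /ev big_nil. Qed.

Lemma im_ext F G : (forall t, F t = G t) -> InIm F -> InIm G.
Proof. by move=> e [b [hb eb]]; exists b; split => // t; rewrite eb e. Qed.

Lemma homog_scale p k (c : chain H) : homog p z c -> homog p z (scalec k c).
Proof. by move=> h a /mapP [a' /h ha' ->]. Qed.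

Lemma im_lin a1 a2 F G : InIm F -> InIm G -> InIm (fun t => a1 * F t + a2 * G t).
Proof.
move=> [bF [hF eF]] [bG [hG eG]]; exists (scalec a1 bF ++ scalec a2 bG); split.
  move=> a; rewrite mem_cat => /orP [] ha;
    [exact: (homog_scale hF ha)|exact: (homog_scale hG ha)].
by move=> t; rewrite ce_bd_cat ev_cat !ce_bd_scale !ev_scale eF eG.
Qed.

Lemma rel u v : InIm (fun t => (br v z + br u v) * E u t + (br u v - br u z) * E v t
                               - br u v * E (u + v) t).
Proof.
exists [:: (1, [:: u; v; z - u - v])]; split.
  move=> a; rewrite inE => /eqP -> /=; split => //.
  by rewrite !big_cons big_nil addr0 -(addrA z) -opprD addrA subrKC.
move=> t; rewrite bd3 /ev !big_cons big_nil addr0 /=.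
have -> : z - u - v = z - (u + v) by rewrite opprD addrA.
have -> : u + (z - (u + v)) = z - v by rewrite opprD addrCA (addrA u) subrr add0r.
have -> : v + (z - (u + v)) = z - u by rewrite opprD addrCA (addrCA v) subrr addr0.
rewrite (alt_swap (z - v)) (alt_swap (z - u)).
rewrite -!/(E _ _) /br !BBr !BDr !Bxx (Banti u v).
rewrite !intrD !intrN; ring.
Qed.


Lemma brD x x' w : br (x + x') w = br x w + br x' w.
Proof. by rewrite /br BDl intrD. Qed.

Variable y : H.
Hypothesis hy : B y z != 0.

Definition m := br y z.
Lemma m_neq0 : m != 0.
Proof. by rewrite /m /br intr_eq0. Qed.

Definition f a t := E a t - br a z / m * E y t.

Lemma relf u v : InIm (fun t => (br v z + br u v) * f u t + (br u v - br u z) * f v t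
                               - br u v * f (u + v) t).
Proof.
apply: im_ext (rel u v) => t; rewrite /f brD; field; exact: m_neq0.
Qed.

Lemma rel_solve u v :
  (br u v - br u z = 0 \/ InIm (f v)) -> (br u v = 0 \/ InIm (f (u + v))) ->
  br v z + br u v != 0 -> InIm (f u).
Proof.
move=> h1 h2 hc.
have X := relf u v.
have Y : InIm (fun t => (br u v - br u z) * f v t - br u v * f (u + v) t).
  have Y1 : InIm (fun t => (br u v - br u z) * f v t).
    case: h1 => [-> | h1].
      by apply: im_ext im_zero => t; rewrite mul0r.
    by apply: im_ext (im_lin (br u v - br u z) 0 h1 h1) => t; rewrite mul0r addr0.
  have Y2 : InIm (fun t => br u v * f (u + v) t).
    case: h2 => [-> | h2].
      by apply: im_ext im_zero => t; rewrite mul0r.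
    by apply: im_ext (im_lin (br u v) 0 h2 h2) => t; rewrite mul0r addr0.
  by apply: im_ext (im_lin 1 (-1) Y1 Y2) => t; rewrite mul1r mulN1r.
apply: im_ext (im_lin (br v z + br u v)^-1 (- (br v z + br u v)^-1) X Y) => t.
by field.
Qed.

Lemma f_y : InIm (f y).
Proof.
apply: im_ext im_zero => t; rewrite /f -/m divff ?mul1r ?subrr //; exact: m_neq0.
Qed.

Lemma f_perp a : B a y = 0 -> InIm (f a).
Proof.
move=> hay; apply: (rel_solve (v := y)); [right; exact: f_y | left; by rewrite /br hay |].
by rewrite /br hay addr0; exact: m_neq0.
Qed.

Lemma f_shift x n : B x z != 0 -> InIm (f (x + z *+ n)) -> InIm (f x).
Proof.
move=> hx; elim: n => [|n IH]; first by rewrite mulr0n addr0.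
move=> h; apply: IH; apply: (rel_solve (v := z)).
- by left; rewrite subrr.
- by right; rewrite -addrA -mulrSr.
- by rewrite /br Bxx add0r BDl Bnl Bxx mul0rn addr0 intr_eq0.
Qed.

Lemma f_nz a : B a z != 0 -> InIm (f a).
Proof.
move=> haz.
have [hay|hay] := eqVneq (B a y) 0; first exact: f_perp.
pose k := B y z * B a y.
pose x := a *~ k.
pose n := (`|B a y| * `|B a y|)%N.
have hx : B x z != 0 by rewrite /x Bzl mulf_neq0 // mulf_neq0.
have hxn : InIm (f (x + z *+ n)).
  apply: f_perp; rewrite BDl Bnl /x Bzl (Banti y z) pmulrn mulrzz /k /n.
  move: (B a y) (B y z) => S M; nia.
have fx := f_shift hx hxn.
have hax : B a x = 0 by rewrite /x Banti Bzl Bxx mul0r oppr0.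
apply: (rel_solve (v := x)); [by right|by left; rewrite /br hax|].
by rewrite /br hax addr0 intr_eq0.
Qed.
Lemma f_zsub a t : f (z - a) t = - f a t.
Proof. rewrite /f Ezsub /br BBl Bxx sub0r intrN; ring. Qed.

Lemma f_ker0 a v : B a z = 0 -> B v z != 0 -> B v (z - a) != 0 -> InIm (f a).
Proof.
move=> haz hvz hv.
apply: (rel_solve (v := v)).
- by right; apply: f_nz.
- by right; apply: f_nz; rewrite BDl haz add0r.
- by rewrite /br -intrD intr_eq0 (Banti v a) -BBr.
Qed.

Lemma f_ker a y2 : B a z = 0 -> B (z - a) y2 != 0 -> InIm (f a).
Proof.
move=> haz h2.
have [h3|h3] := eqVneq (B y2 z) 0; last first.
  by apply: (f_ker0 haz h3); rewrite Banti oppr_eq0.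
have [h4|h4] := eqVneq (B y (z - a)) 0; last exact: (f_ker0 haz hy).
apply: (f_ker0 (v := y + y2) haz); rewrite BDl.
  by rewrite h3 addr0.
by rewrite h4 add0r Banti oppr_eq0.
Qed.

Lemma f_all a : InIm (f a).
Proof.
have [haz|haz] := eqVneq (B a z) 0; last exact: f_nz.
case: (classic (exists y2, B (z - a) y2 != 0)) => [[y2 h2]|n1].
  exact: (f_ker haz h2).
case: (classic (exists y2, B a y2 != 0)) => [[y2 h2]|n2].
  have hz : B (z - a) z = 0 by rewrite BBl Bxx haz subrr.
  have h2' : B (z - (z - a)) y2 != 0 by rewrite subKr.
  have := f_ker hz h2'.
  move=> Hf; apply: im_ext (im_lin (-1) 0 Hf Hf) => t.
  by rewrite f_zsub mul0r addr0 mulN1r opprK.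
exfalso; move: hy; rewrite Banti oppr_eq0 -(subrKC a z) BDl.
have -> : B a y = 0 by apply/eqP; apply: contraT => hn; case: n2; exists y.
have -> : B (z - a) y = 0 by apply/eqP; apply: contraT => hn; case: n1; exists y.
by rewrite addr0.
Qed.
Definition g (c : chain H) := \sum_(a <- c) a.1 * br (nth 0 a.2 0) z.

Lemma homog_cons p a (c : chain H) :
  homog p z (a :: c) -> homog p z c /\ size a.2 = p /\ \sum_(h <- a.2) h = z.
Proof.
move=> h; split; last by apply: h; rewrite mem_head.
by move=> b hb; apply: h; rewrite inE hb orbT.
Qed.

Lemma two_shape (s : seq H) : size s = 2%N -> \sum_(h <- s) h = z ->
  s = [:: nth 0 s 0; z - nth 0 s 0].
Proof.
case: s => [|x [|w [|]]] //= _; rewrite !big_cons big_nil addr0 => <-.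
by rewrite addrAC subrr add0r.
Qed.

Lemma main_im c : homog 2 z c -> InIm (fun t => ev c t - g c / m * E y t).
Proof.
elim: c => [|[q s] c IH] h.
  by apply: im_ext im_zero => t; rewrite /ev /g !big_nil mul0r mul0r subrr.
case/homog_cons: h => hc [hs1 hs2].
rewrite /= in hs1 hs2.
have es := two_shape hs1 hs2.
apply: im_ext (im_lin q 1 (f_all (nth 0 s 0)) (IH hc)) => t.
rewrite /ev /g !big_cons -/(ev c t) -/(g c) /= es /= -/(E _ _) /f.
field; exact: m_neq0.
Qed.

Lemma cycle_val c : homog 2 z c -> ev (ce_bd B c) [:: z] = - g c.
Proof.
elim: c => [|[q s] c IH] h; first by rewrite /ev /g !big_nil oppr0.
case/homog_cons: h => hc [hs1 hs2].
rewrite /= in hs1 hs2.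
have es := two_shape hs1 hs2.
rewrite -cat1s ce_bd_cat ev_cat IH // es bd2 /ev /g !big_cons !big_nil /=.
rewrite subrKC alt1 eqxx /br BBr Bxx subr0 -/(g c).
rewrite subr0 mulr1; ring.
Qed.
End Main.

Theorem proposition4p1 (H : zmodType) (B : H -> H -> int) (z : H) :
  alt_bilinear B -> not_in_ker_mu B z -> CE_homology_vanishes B 2 z.
Proof.
move=> hB [y hzy] c hc hcyc.
have hy : B y z != 0 by rewrite (Banti hB) oppr_eq0.
have [b [hb eb]] := main_im hB hy hc.
exists b; split => // t; rewrite eb.
have := hcyc [:: z]; rewrite (cycle_val hB hc) /ev big_nil => /eqP.
rewrite oppr_eq0 => /eqP ->.
by rewrite mul0r mul0r subr0.
Qed.
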